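(* Let $G$ be a connected graph that is not a clique and that has a min-max clique covering satisfying simple intersection, and let $\mathcal{C}(G)$ be its compressed cliques graph. Then \[ |V(G)|-Z_+(G)=|V(\mathcal{C}(G))|-Z_+(\mathcal{C}(G)). \] Moreover, there exist collections of forcing trees for $G$ and for $\mathcal{C}(G)$ that differ only in that the collection for $G$ may contain additional forcing trees that are isolated vertices.
   Context: A clique covering of a graph is a set of cliques such that every edge lies in at least one of them; $\operatorname{cc}(G)$ is its minimum size. A min-max clique covering is a clique covering of size $\operatorname{cc}(G)$ consisting of maximal cliques; it has simple intersection if no three distinct cliques of it share a vertex. Given such a covering $\{C_1,\dots,C_\ell\}$, put $C_{i,j}=C_i\cap C_j$ ($i\ne j$) and $C_{i,i}=C_i\setminus\bigcup_{j\ne i}C_j$; the compressed cliques graph $\mathcal{C}(G)$ has a vertex $v_{i,j}$ for each non-empty $C_{i,j}$ (including $i=j$), with $v_{i,j}\sim v_{i',j'}$ iff $\{i,j\}\cap\{i',j'\}\ne\emptyset$. Positive zero forcing: initially the vertices of a set $B$ are black and all others white. Repeatedly, let $W_1,\dots,W_k$ be the vertex sets of the components of $G$ minus the black vertices; if a black vertex $u$ has exactly one white neighbour $w$ in the subgraph induced by $W_i\cup(\text{black vertices})$, then $u$ may force $w$ (colour it black). $B$ is a positive zero forcing set if eventually all vertices become black; $Z_+(G)$ is the minimum size of such a set. Recording which vertex forces which, the forcing process partitions $V(G)$ into vertex-disjoint induced rooted trees called forcing trees (roots being initially black vertices). *)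

(* Defs.v *)
From HB Require Import structures.
From mathcomp Require Import all_boot.
From mathcomp Require Import boolp.

Set Implicit Arguments.
Unset Strict Implicit.
Unset Printing Implicit Defensive.

(* A simple graph: vertex finType V, adjacency e : rel V, assumed symmetric
   and irreflexive in the theorem. *)

Section Graphs.
Variables (V : finType) (e : rel V).

Definition connected_graph : Prop := forall x y : V, connect e x y.

Definition is_complete_graph : Prop := forall x y : V, x != y -> e x y.

Definition is_clique (K : {set V}) : bool :=
  [forall x in K, forall y in K, (x != y) ==> e x y].

Definition is_maximal_clique (K : {set V}) : bool := maxset is_clique K.

Definition clique_covering (l : nat) (C : 'I_l -> {set V}) : Prop :=
  (forall i, is_clique (C i)) /\
  (forall x y, e x y -> exists i, (x \in C i) && (y \in C i)).

Definition min_max_clique_covering (l : nat) (C : 'I_l -> {set V}) : Prop :=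
  [/\ clique_covering C,
      (forall (l' : nat) (C' : 'I_l' -> {set V}), clique_covering C' -> l <= l')
    & (forall i, is_maximal_clique (C i))].

Definition white_rel (S : {set V}) : rel V :=
  [rel a b | [&& e a b, a \notin S & b \notin S]].

Definition forces (S : {set V}) (u w : V) : bool :=
  [&& u \in S, w \notin S, e u w &
      [forall x, [&& x \notin S, e u x & connect (white_rel S) w x] ==> (x == w)]].

Fixpoint valid_forcing (S : {set V}) (s : seq (V * V)) : bool :=
  if s is p :: s' then forces S p.1 p.2 && valid_forcing (p.2 |: S) s'
  else true.

(* (B, s): initial black set B and a chronological list of forces which
   colours every vertex black.  The forcing trees are the rooted trees with
   roots B and edges the pairs of s. *)
Definition complete_forcing (B : {set V}) (s : seq (V * V)) : bool :=
  valid_forcing B s && (B :|: [set x in unzip2 s] == [set: V]).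

Definition pzf_set (B : {set V}) : Prop := exists s, complete_forcing B s.

(* Z_+(G): minimum size of a positive zero forcing set ([set: V] is one,
   so the default value #|V| is harmless) *)
Definition Zplus : nat := \big[minn/#|V|]_(B : {set V} | `[< pzf_set B >]) #|B|.

End Graphs.

Section Compressed.
Variables (V : finType) (l : nat) (C : 'I_l -> {set V}).

Definition simple_intersection : Prop :=
  forall i j k : 'I_l, i != j -> j != k -> i != k -> C i :&: C j :&: C k = set0.

Definition Cij (i j : 'I_l) : {set V} :=
  if i == j then C i :\: \bigcup_(k | k != i) C k else C i :&: C j.

(* vertices v_{i,j} ({i,j} unordered, represented with i <= j) with C_{i,j} <> 0 *)
Definition cvert_pred : pred ('I_l * 'I_l) :=
  fun p => (p.1 <= p.2)%N && (Cij p.1 p.2 != set0).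

Definition cvert : finType := {p : 'I_l * 'I_l | cvert_pred p}.

Definition cadj : rel cvert :=
  fun v w => (v != w) &&
    ([set (val v).1; (val v).2] :&: [set (val w).1; (val w).2] != set0).

End Compressed.

(* Main.v *)
Require Import Defs.
From HB Require Import structures.
From mathcomp Require Import all_boot.
From mathcomp Require Import boolp.
From mathcomp Require Import zify.

Set Implicit Arguments.
Unset Strict Implicit.
Unset Printing Implicit Defensive.

Section ZplusLemmas.
Variables (V : finType) (e : rel V).

Lemma bigminn_le (I : eqType) (r : seq I) (P : pred I) (F : I -> nat) x j :
  j \in r -> P j -> \big[minn/x]_(i <- r | P i) F i <= F j.
Proof.
elim: r => [//|a r IH]; rewrite inE big_cons => /orP[/eqP <-|jr] Pj.
  by rewrite Pj geq_minl.
case: ifP => _; last exact: IH.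
by rewrite geq_min IH ?orbT.
Qed.

Lemma Zplus_le B : pzf_set e B -> Zplus e <= #|B|.
Proof.
move=> HB; rewrite /Zplus; apply: bigminn_le; first by rewrite mem_index_enum.
by apply/asboolP.
Qed.

Lemma Zplus_ex : exists B, pzf_set e B /\ #|B| = Zplus e.
Proof.
rewrite /Zplus.
pose Q m := m = #|V| \/ exists B, pzf_set e B /\ #|B| = m.
have : Q (\big[minn/#|V|]_(B : {set V} | `[< pzf_set e B >]) #|B|).
  apply: (big_ind Q); first by left.
    move=> a b Ha Hb; rewrite /minn; by case: ifP.
  move=> B /asboolP HB; right; by exists B.
case=> [->|//]; exists setT; split; last by rewrite cardsT.
exists [::]; by rewrite /complete_forcing /= setU0.
Qed.

Lemma targets_cons (p : V * V) s :
  [set x in unzip2 (p :: s)] = p.2 |: [set x in unzip2 s].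
Proof. by apply/setP=> x; rewrite !inE. Qed.

End ZplusLemmas.

Lemma cliqueP (V : finType) (e : rel V) K x y :
  is_clique e K -> x \in K -> y \in K -> x != y -> e x y.
Proof.
by move=> /forallP /(_ x) /implyP /(_ _) /forallP H xK yK nxy; move: (H xK y) => /implyP /(_ yK) /implyP; apply.
Qed.

Section Struct.
Variables (T : finType) (e : rel T) (l : nat) (C : 'I_l -> {set T}).
Hypothesis esym : symmetric e.
Hypothesis eirr : irreflexive e.
Hypothesis cov : clique_covering e C.
Hypothesis simp : simple_intersection C.

Definition Mv (v : cvert C) : {set 'I_l} := [set (val v).1; (val v).2].
Definition Kc (v : cvert C) : {set T} := Cij C (val v).1 (val v).2.
Definition Mx (x : T) : {set 'I_l} := [set k | x \in C k].

Lemma edgeM x y : e x y = (x != y) && (Mx x :&: Mx y != set0).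
Proof.
apply/idP/idP.
  move=> exy; apply/andP; split.
    by apply/eqP=> E; move: exy; rewrite E eirr.
  have [i /andP[xi yi]] := cov.2 _ _ exy; apply/set0Pn; exists i; by rewrite !inE xi yi.
move=> /andP[nxy /set0Pn[k]]; rewrite !inE => /andP[xk yk].
exact: (cliqueP (cov.1 k) xk yk nxy).
Qed.

Lemma KM_gen i j x : x \in Cij C i j -> Mx x = [set i; j].
Proof.
rewrite /Cij; case: eqP => [<-|/eqP nij].
  rewrite setUid inE => /andP[nb xi]; apply/setP=> k; rewrite !inE.
  case: (eqVneq k i) => [->//|nki]; apply/negP=> xk; move/negP: nb; apply.
  by apply/bigcupP; exists k.
rewrite inE => /andP[xi xj]; apply/setP=> k; rewrite !inE.
case: (eqVneq k i) => [->//|nki]; case: (eqVneq k j) => [->//|nkj] /=.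
apply/negP=> xk.
have : x \in C i :&: C j :&: C k by rewrite !inE xi xj xk.
rewrite simp ?inE //; by rewrite eq_sym.
Qed.

Lemma KM v x : x \in Kc v -> Mx x = Mv v.
Proof. exact: KM_gen. Qed.

Lemma Mv_inj v w : Mv v = Mv w -> v = w.
Proof.
case: v => [[a b] /= Hv]; case: w => [[c d] /= Hw]; rewrite /Mv /= => E.
have /andP[hab _] := Hv; have /andP[hcd _] := Hw; simpl in hab, hcd.
have h1 : c \in [set a; b] by rewrite E !inE eqxx.
have h2 : d \in [set a; b] by rewrite E !inE eqxx orbT.
have h3 : a \in [set c; d] by rewrite -E !inE eqxx.
have h4 : b \in [set c; d] by rewrite -E !inE eqxx orbT.
move: h1 h2 h3 h4; rewrite !inE -!val_eqE /= => h1 h2 h3 h4.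
have [ac bd] : (a : nat) = c /\ (b : nat) = d.
  move: h1 h2 h3 h4 => /orP[]/eqP h1 /orP[]/eqP h2 /orP[]/eqP h3 /orP[]/eqP h4; lia.
apply: val_inj => /=; congr pair; exact: val_inj.
Qed.

Lemma K_inj v w x : x \in Kc v -> x \in Kc w -> v = w.
Proof. by move=> /KM E1 /KM E2; apply: Mv_inj; rewrite -E1 -E2. Qed.

Lemma K_cover x : (exists y, e x y) -> exists v, x \in Kc v.
Proof.
case=> y exy; have [i /andP[xi _]] := cov.2 _ _ exy.
have two : forall a b : 'I_l, a <= b -> a != b -> x \in C a -> x \in C b ->
    exists v, x \in Kc v.
  move=> a b hab nab xa xb.
  have P : cvert_pred C (a, b).
    rewrite /cvert_pred /= hab /Cij (negbTE nab); apply/set0Pn; exists x.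
    by rewrite inE xa xb.
  exists (exist _ (a, b) P); by rewrite /Kc /Cij /= (negbTE nab) inE xa xb.
case: (boolP [exists j, (j != i) && (x \in C j)]).
  move=> /existsP[j /andP[nji xj]].
  case: (leqP i j) => hij.
    by apply: (two i j) => //; rewrite eq_sym.
  by apply: (two j i) => //; apply: ltnW.
move=> /existsPn H.
have xK : x \in C i :\: \bigcup_(k | k != i) C k.
  rewrite inE xi andbT; apply/bigcupP => [[k nki xk]].
  by move: (H k); rewrite nki xk.
have P : cvert_pred C (i, i).
  by rewrite /cvert_pred /= leqnn /Cij eqxx; apply/set0Pn; exists x.
by exists (exist _ (i, i) P); rewrite /Kc /Cij /= eqxx.
Qed.


Section Maps.
Variables (cls : T -> cvert C) (phi : cvert C -> T) (nb : cvert C -> cvert C).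
Hypothesis clsP : forall x, x \in Kc (cls x).
Hypothesis phiP : forall v, phi v \in Kc v.
Hypothesis nbP : forall v, cadj (C := C) v (nb v).

Lemma clsK x v : x \in Kc v -> cls x = v.
Proof. move=> xv; exact: K_inj (clsP x) xv. Qed.

Lemma cls_phi v : cls (phi v) = v.
Proof. exact: clsK. Qed.

Lemma phi_inj : injective phi.
Proof. by move=> v w E; rewrite -(cls_phi v) E cls_phi. Qed.

Lemma edgeC x y : e x y = (x != y) && (Mv (cls x) :&: Mv (cls y) != set0).
Proof. by rewrite edgeM (KM (clsP x)) (KM (clsP y)). Qed.

Lemma cadjE v w : cadj (C := C) v w = (v != w) && (Mv v :&: Mv w != set0).
Proof. by []. Qed.

Lemma cadj_sym : symmetric (cadj (C := C)).
Proof. by move=> v w; rewrite !cadjE eq_sym setIC. Qed.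

Lemma Mv_self v : Mv v :&: Mv v != set0.
Proof. by rewrite setIid; apply/set0Pn; exists (val v).1; rewrite !inE eqxx. Qed.

Lemma same_adj x y : cls x = cls y -> x != y -> e x y.
Proof. by move=> E nxy; rewrite edgeC nxy E Mv_self. Qed.

Lemma twin u w y : e u w -> cls y = cls w -> y != u -> e u y.
Proof. by rewrite !edgeC => /andP[_ H] E nyu; rewrite E H eq_sym nyu. Qed.

Lemma adj_cls x y : e x y -> (cls x = cls y) \/ cadj (C := C) (cls x) (cls y).
Proof.
rewrite edgeC => /andP[_ H]; case: (eqVneq (cls x) (cls y)) => [->|n]; first by left.
by right; rewrite cadjE n H.
Qed.

Lemma cadj_e x y : cadj (C := C) (cls x) (cls y) -> e x y.
Proof.
rewrite cadjE edgeC => /andP[n ->]; rewrite andbT.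
by apply: contraNneq n => ->.
Qed.

Definition SG (S : {set cvert C}) : {set T} :=
  [set x | (x != phi (cls x)) || (cls x \in S)].
Definition fmap (s : seq (cvert C * cvert C)) : seq (T * T) :=
  [seq (phi q.1, phi q.2) | q <- s].

Lemma white_G S x : (x \notin SG S) = (x == phi (cls x)) && (cls x \notin S).
Proof. by rewrite inE negb_or negbK. Qed.

Lemma SG_add S q : SG (q |: S) = phi q |: SG S.
Proof.
apply/setP=> x; rewrite !inE.
case: (eqVneq x (phi q)) => [->|nxq] /=; first by rewrite cls_phi !eqxx.
case: (eqVneq x (phi (cls x))) => [E|//] /=.
case: (eqVneq (cls x) q) => [E2|//]; by move: nxq; rewrite {1}E E2 eqxx.
Qed.

Lemma conn_up S a b : connect (white_rel e (SG S)) a b ->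
  connect (white_rel (cadj (C := C)) S) (cls a) (cls b).
Proof.
move/connectP=> [p]; elim: p a => [|c p IH] a /=; first by move=> _ ->.
move=> /andP[wac pth] Eb; apply: connect_trans (IH c pth Eb).
move: wac; rewrite /white_rel /= => /and3P[eac ha hc].
move: ha hc; rewrite !white_G => /andP[_ ha] /andP[_ hc].
case: (adj_cls eac) => [->//|H]; apply: connect1; by rewrite /= H ha hc.
Qed.

Lemma forces_up S p q : forces (cadj (C := C)) S p q -> forces e (SG S) (phi p) (phi q).
Proof.
move=> /and4P[pS qS apq /forallP H]; apply/and4P; split.
- by rewrite inE; apply/orP; right; rewrite cls_phi.
- by rewrite white_G cls_phi eqxx qS.
- move: apq; rewrite cadjE edgeC !cls_phi => /andP[npq ->].
  by rewrite (inj_eq phi_inj) npq.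
apply/forallP=> x; apply/implyP=> /and3P[xw ex cx].
move: xw; rewrite white_G => /andP[/eqP xE rS].
have cH := conn_up cx; rewrite cls_phi in cH.
have apx : cadj (C := C) p (cls x).
  move: ex; rewrite edgeC cadjE cls_phi => /andP[n ->]; rewrite andbT.
  by apply: contraNneq n => E; rewrite xE -E.
move: (H (cls x)); rewrite rS apx cH /= => /eqP E.
by rewrite xE E.
Qed.

Lemma valid_up S s : valid_forcing (cadj (C := C)) S s -> valid_forcing e (SG S) (fmap s).
Proof.
elim: s S => [//|[p q] s IH] S /= /andP[F V].
by rewrite (forces_up F) /= -SG_add IH.
Qed.

Lemma complete_up B s : complete_forcing (cadj (C := C)) B s ->
  complete_forcing e (SG B) (fmap s).
Proof.
move=> /andP[V /eqP E]; rewrite /complete_forcing valid_up //=.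
apply/eqP/setP=> x; rewrite !inE.
case: (eqVneq x (phi (cls x))) => [xE|//] /=.
have : cls x \in B :|: [set y in unzip2 s] by rewrite E inE.
rewrite !inE => /orP[->//|H]; apply/orP; right.
rewrite /fmap /unzip2 -map_comp; apply/mapP; case/mapP: H => [[a b] ab /= E2].
by exists (a, b) => //=; rewrite xE E2.
Qed.

Lemma card_SG B : #|SG B| + #|cvert C| = #|B| + #|T|.
Proof.
have E : SG B = ~: [set phi v | v in ~: B].
  apply/setP=> x; rewrite !inE; apply/idP/idP.
    case/orP=> [n|xB]; apply/imsetP => [[v vB xE]].
      by move: n; rewrite xE cls_phi eqxx.
    by move: vB xB; rewrite xE cls_phi inE => /negP.
  move=> H; case: (eqVneq x (phi (cls x))) => [xE|//] /=.
  apply/negPn/negP => nB; move/negP: H; apply; apply/imsetP; exists (cls x) => //.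
  by rewrite inE.
rewrite E; have := cardsC [set phi v | v in ~: B]; rewrite card_imset; last exact: phi_inj.
have := cardsC B; lia.
Qed.

Definition SH (S : {set T}) : {set cvert C} := [set v | Kc v \subset S].
Definition fd (p : T * T) : cvert C * cvert C :=
  (if cls p.1 == cls p.2 then nb (cls p.2) else cls p.1, cls p.2).

Lemma last_white S u w y : forces e S u w -> cls y = cls w -> y != w -> y \in S.
Proof.
move=> /and4P[uS wS euw /forallP H] E nyw; apply/negPn/negP => yS.
have nyu : y != u by apply: contraNneq yS => ->.
have euy := twin euw E nyu.
have ewy : e w y by apply: same_adj; [exact: sym_equal | rewrite eq_sym].
have c : connect (white_rel e S) w y by apply: connect1; rewrite /white_rel /= ewy wS yS.
by move: (H y); rewrite yS euy c /= (negbTE nyw).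
Qed.

Lemma SH_add S u w : forces e S u w -> SH (w |: S) = cls w |: SH S.
Proof.
move=> F; have /and4P[_ wS _ _] := F; apply/setP => v; rewrite !inE.
case: (eqVneq v (cls w)) => [->|nv] /=.
  apply/subsetP => y yK; have E := clsK yK.
  case: (eqVneq y w) => [->|n]; first by rewrite setU11.
  by rewrite setU1r // (last_white F E n).
apply/idP/idP => /subsetP H; apply/subsetP => y yK.
  have := H y yK; rewrite !inE => /orP[/eqP E|//].
  by move: nv; rewrite -(clsK yK) E eqxx.
by rewrite setU1r // (H y yK).
Qed.

Lemma conn_down (S : {set T}) (w : T) (X : cvert C) : w \notin S ->
  connect (white_rel (cadj (C := C)) (SH S)) (cls w) X ->
  exists2 x, cls x = X & (x \notin S) && connect (white_rel e S) w x.
Proof.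
move=> wS /connectP[p].
suff gen : forall (Y : cvert C) y, cls y = Y -> y \notin S ->
    connect (white_rel e S) w y -> path (white_rel (cadj (C := C)) (SH S)) Y p ->
    X = last Y p -> exists2 x, cls x = X & (x \notin S) && connect (white_rel e S) w x.
  by apply: gen => //; exact: connect0.
elim: p => [|Z p IH] Y y Ey yS cy /=.
  by move=> _ ->; exists y => //; rewrite yS cy.
move=> /andP[hYZ pth] EX; move: hYZ; rewrite /white_rel /= => /and3P[aYZ _].
rewrite inE => /subsetPn[z zK zS].
apply: (IH Z z (clsK zK) zS) => //.
apply: connect_trans cy (connect1 _); rewrite /white_rel /= yS zS !andbT.
by apply: cadj_e; rewrite Ey (clsK zK).
Qed.

Lemma forces_down S u w : forces e S u w ->
  forces (cadj (C := C)) (SH S) (if cls u == cls w then nb (cls w) else cls u) (cls w).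
Proof.
move=> F; have /and4P[uS wS euw /forallP H] := F.
have qn : cls w \notin SH S by rewrite inE; apply/subsetPn; exists w.
case: eqP => [Euw|nuw].
  have nbw : forall z, e w z -> z \in S.
    move=> z ewz; case: (eqVneq z u) => [->//|nzu].
    have ezu : e z u by apply: (twin (w := w)); [rewrite esym | exact: Euw | rewrite eq_sym].
    apply/negPn/negP => zS.
    have c : connect (white_rel e S) w z by apply: connect1; rewrite /white_rel /= ewz wS zS.
    move: (H z); rewrite zS esym ezu c /= => /eqP E.
    by move: ewz; rewrite E eirr.
  apply/and4P; split => //.
  - rewrite inE; apply/subsetP => y yK; apply: nbw; apply: cadj_e.
    by rewrite (clsK yK).
  - by rewrite cadj_sym.
  apply/forallP => X; apply/implyP => /and3P[Xn _ cX].
  have [x Ex /andP[_ cx]] := conn_down wS cX.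
  move/connectP: cx => [[|c p] /=]; first by move=> _ E; rewrite -Ex E eqxx.
  by move=> /andP[/and3P[ewc _ cS] _]; move: cS; rewrite (nbw c ewc).
have pin : cls u \in SH S.
  rewrite inE; apply/subsetP => y yK; have Ey := clsK yK.
  apply/negPn/negP => yS.
  have nyu : y != u by apply: contraNneq yS => ->.
  have nyw : y != w by apply/eqP => E; apply: nuw; rewrite -Ey E.
  have ewy : e w y by apply: (twin (w := u)); [rewrite esym | exact: Ey | exact: nyw].
  have euy : e u y by apply: same_adj => //; rewrite eq_sym.
  have c : connect (white_rel e S) w y by apply: connect1; rewrite /white_rel /= ewy wS yS.
  by move: (H y); rewrite yS euy c /= (negbTE nyw).
apply/and4P; split => //.
- move: euw; rewrite edgeC cadjE => /andP[_ ->]; rewrite andbT.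
  by apply/eqP.
apply/forallP => X; apply/implyP => /and3P[Xn aX cX].
have [x Ex /andP[xS cx]] := conn_down wS cX.
have eux : e u x by apply: cadj_e; rewrite Ex.
by move: (H x); rewrite xS eux cx /= => /eqP E; rewrite -Ex E eqxx.
Qed.

Lemma valid_down S s : valid_forcing e S s ->
  valid_forcing (cadj (C := C)) (SH S) (map fd s).
Proof.
elim: s S => [//|[u w] s IH] S /= /andP[F V].
by rewrite /fd /= (forces_down F) /= -(SH_add F) IH.
Qed.

Lemma card_down S s : valid_forcing e S s -> S :|: [set x in unzip2 s] = setT ->
  #|S| + #|cvert C| = #|SH S| + #|T|.
Proof.
elim: s S => [|[u w] s IH] S /=.
  move=> _; rewrite (_ : [set x in [::]] = set0); last by apply/setP=> x; rewrite !inE.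
  rewrite setU0 => ->; rewrite (_ : SH setT = setT); last by apply/setP=> v; rewrite !inE subsetT.
  by rewrite !cardsT addnC.
move=> /andP[F V] E.
have E2 : (w |: S) :|: [set x in unzip2 s] = setT.
  rewrite -E; apply/setP=> x; rewrite !inE; by case: (x == w); case: (x \in S).
have := IH _ V E2; rewrite (SH_add F) !cardsU1.
have /and4P[_ wS _ _] := F.
have qn : cls w \notin SH S by rewrite inE; apply/subsetPn; exists w.
rewrite wS qn /=; lia.
Qed.

Lemma complete_down B s : complete_forcing e B s ->
  complete_forcing (cadj (C := C)) (SH B) (map fd s).
Proof.
move=> /andP[V /eqP E]; rewrite /complete_forcing valid_down //=.
apply/eqP/setP=> v; rewrite !inE.
case: (boolP (Kc v \subset B)) => [//|/subsetPn[z zK zB]] /=.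
have : z \in B :|: [set y in unzip2 s] by rewrite E inE.
rewrite !inE (negbTE zB) /= => /mapP[[a b] ab /= Ez].
apply/mapP; exists (fd (a, b)); first by apply/mapP; exists (a, b).
by rewrite /fd /= -Ez (clsK zK).
Qed.

End Maps.
End Struct.


Theorem mainTheorem5 (T : finType) (e : rel T) (l : nat) (C : 'I_l -> {set T}) :
  symmetric e -> irreflexive e ->
  connected_graph e -> ~ is_complete_graph e ->
  min_max_clique_covering e C -> simple_intersection C ->
  #|T| - Zplus e = #|cvert C| - Zplus (cadj (C := C))
  /\
  exists (phi : cvert C -> T) (BG : {set T}) (sG : seq (T * T))
         (BC : {set cvert C}) (sC : seq (cvert C * cvert C)),
    [/\ (forall v : cvert C, phi v \in Cij C (val v).1 (val v).2),
        complete_forcing e BG sG /\ #|BG| = Zplus e,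
        complete_forcing (cadj (C := C)) BC sC /\ #|BC| = Zplus (cadj (C := C)),
        phi @: BC \subset BG /\
        (forall p, (p \in sG) = (p \in [seq (phi q.1, phi q.2) | q <- sC]))
      & forall x, x \in BG -> x \notin phi @: BC ->
          forall p, p \in sG -> (p.1 != x) && (p.2 != x)].
Proof.
move=> esym eirr conn ncomp [cov _ _] simp.
have [x0 [y0 [nxy nexy]]] : exists x y, x != y /\ ~~ e x y.
  case: (boolP [exists x, exists y, (x != y) && ~~ e x y]).
    by move=> /existsP[x /existsP[y /andP[a b]]]; exists x, y.
  move=> /existsPn H; exfalso; apply: ncomp => x y nxy.
  by move: (H x) => /existsPn /(_ y); rewrite nxy /= negbK.
have hasnb : forall z, exists y, e z y.
  move=> z; have [t nzt czt] : exists2 t, z != t & connect e z t.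
    case: (eqVneq z x0) => [->|n]; first by exists y0 => //; apply: conn.
    by exists x0 => //; apply: conn.
  case/connectP: czt => [[|c p] /=]; first by move=> _ E; rewrite E eqxx in nzt.
  by move=> /andP[ezc _] _; exists c.
have clsE : forall x, exists v : cvert C, x \in Kc v.
  by move=> x; apply: (K_cover cov); apply: hasnb.
pose cls x := xchoose (clsE x).
have clsP : forall x, x \in Kc (cls x) := fun x => xchooseP (clsE x).
have phiE : forall v : cvert C, exists x, x \in Kc v.
  by move=> v; have /andP[_ /set0Pn[x hx]] := valP v; exists x.
pose phi v := xchoose (phiE v).
have phiP : forall v, phi v \in Kc v := fun v => xchooseP (phiE v).
have nbE : forall v : cvert C, exists w, cadj (C := C) v w.
  move=> v; case: (boolP [exists a, exists b, [&& a \in Kc v, b \notin Kc v & e a b]]).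
    move=> /existsP[a /existsP[b /and3P[aK bK eab]]]; exists (cls b).
    case: (adj_cls eirr cov simp clsP eab) => [E|].
      by move: bK; rewrite -(clsK simp clsP aK) E clsP.
    by rewrite (clsK simp clsP aK).
  move=> /existsPn H; exfalso.
  have cl : closed e (Kc v).
    move=> a b eab; apply/idP/idP => Ha; apply/negPn/negP => Hb.
      by move: (H a) => /existsPn /(_ b); rewrite Ha Hb eab.
    by move: (H b) => /existsPn /(_ a); rewrite Ha Hb esym eab.
  have hx : x0 \in Kc v by rewrite -(closed_connect cl (conn (phi v) x0)) phiP.
  have hy : y0 \in Kc v by rewrite -(closed_connect cl (conn (phi v) y0)) phiP.
  move/negP: nexy; apply; apply: (same_adj eirr cov simp clsP) => //.
  by rewrite (clsK simp clsP hx) (clsK simp clsP hy).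
pose nb v := xchoose (nbE v).
have nbP : forall v, cadj (C := C) v (nb v) := fun v => xchooseP (nbE v).
have pinj := phi_inj simp clsP phiP.
have [BC [[sC HC] cardBC]] := Zplus_ex (cadj (C := C)).
have HG := complete_up eirr cov simp clsP phiP HC.
have cardG := card_SG simp clsP phiP BC.
have [BB [[sB HB] cardBB]] := Zplus_ex e.
have Hd := complete_down esym eirr cov simp clsP nbP HB.
have ld : Zplus (cadj (C := C)) <= #|SH C BB| by apply: Zplus_le; eexists; exact: Hd.
have cd : #|BB| + #|cvert C| = #|SH C BB| + #|T|.
  move: HB => /andP[V /eqP E]; exact: (card_down eirr cov simp clsP V E).
have up : Zplus e <= #|SG cls phi BC| by apply: Zplus_le; eexists; exact: HG.
have cT : #|cvert C| <= #|T| := leq_card phi pinj.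
have cH : #|BC| <= #|cvert C| := max_card (mem BC).
have ZG : Zplus e = #|SG cls phi BC| by lia.
split; first by lia.
exists phi, (SG cls phi BC), (fmap phi sC), BC, sC; split => //.
  split => //; apply/subsetP => x /imsetP[v vB ->]; by rewrite inE cls_phi // vB orbT.
move=> x xB xn p /mapP[q _ ->] /=.
have nx : forall a, phi a != x.
  move=> a; apply/eqP => E; move/negP: xn; apply; apply/imsetP; exists a => //.
  move: xB; rewrite inE -E (cls_phi simp clsP phiP) eqxx /=.
  done.
by rewrite !nx.
Qed.
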